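(* Let $P(\lambda)$ be an $n\times n$ singular matrix polynomial of degree $d$ and normal rank $n-k$, and let $S_R(\lambda)=[x_1(\lambda)\ \dots\ x_k(\lambda)]$ be an $n\times k$ matrix polynomial whose columns form a minimal basis of the right nullspace of $P(\lambda)$, with right minimal indices $m_1,\dots,m_k$. Then there exists $V\in\mathbb C^{n\times k}$ such that the polynomial $\det(V^*S_R(\lambda))$ has exactly $M=m_1+\cdots+m_k$ simple zeros.
   Context: Normal rank: $\mathrm{nrank}(P)=\max_{\zeta\in\mathbb C}\mathrm{rank}\,P(\zeta)$; $P$ is singular if $\det P(\lambda)\equiv0$. The right nullspace of $P$ is $\{x(\lambda)\in\mathbb C(\lambda)^n: P(\lambda)x(\lambda)\equiv0\}$. A polynomial basis of it is minimal if the sum of the degrees of its vectors is minimal among all polynomial bases; these degrees are the right minimal indices. *)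

(* Defs.v *)
From mathcomp Require Import all_boot all_order all_algebra.
From mathcomp Require Import fraction reals complex.
Set Implicit Arguments. Unset Strict Implicit. Unset Printing Implicit Defensive.
Import Order.TTheory GRing.Theory Num.Theory.
Local Open Scope ring_scope.

Section MatrixPolynomials.
Variable C : fieldType.

Definition mxpoly_eval m n (P : 'M[{poly C}]_(m, n)) (z : C) : 'M[C]_(m, n) :=
  map_mx (fun p => p.[z]) P.

Definition mxpoly_deg m n (P : 'M[{poly C}]_(m, n)) : nat :=
  (\max_(i < m) \max_(j < n) size (P i j)).-1.

Definition is_nrank m n (P : 'M[{poly C}]_(m, n)) (r : nat) : Prop :=
  (exists z : C, \rank (mxpoly_eval P z) = r) /\
  (forall z : C, (\rank (mxpoly_eval P z) <= r)%N).

Definition singular_mxpoly n (P : 'M[{poly C}]_n) : Prop := \det P = 0.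

Definition ratfun := {fraction {poly C}}.
Definition fracmx m n (A : 'M[{poly C}]_(m, n)) : 'M[ratfun]_(m, n) :=
  map_mx (@FracField.tofrac {poly C}) A.

Definition in_right_nullspace m n (P : 'M[{poly C}]_(m, n)) (x : 'cV[ratfun]_n) :
  Prop := fracmx P *m x = 0.

Definition right_nullspace_poly_basis m n k (P : 'M[{poly C}]_(m, n))
    (S : 'M[{poly C}]_(n, k)) : Prop :=
  [/\ forall j : 'I_k, in_right_nullspace P (col j (fracmx S)),
      \rank (fracmx S) = k &
      forall x : 'cV[ratfun]_n, in_right_nullspace P x ->
        (x^T <= (fracmx S)^T)%MS].

Definition vec_deg n (x : 'cV[{poly C}]_n) : nat := (\max_(i < n) size (x i ord0)).-1.

Definition col_deg_sum n k (S : 'M[{poly C}]_(n, k)) : nat :=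
  \sum_(j < k) vec_deg (col j S).

Definition right_minimal_basis m n k (P : 'M[{poly C}]_(m, n))
    (S : 'M[{poly C}]_(n, k)) : Prop :=
  right_nullspace_poly_basis P S /\
  forall k' (T : 'M[{poly C}]_(n, k')), right_nullspace_poly_basis P T ->
    (col_deg_sum S <= col_deg_sum T)%N.

Definition simple_zero (p : {poly C}) (z : C) : bool := mup z p == 1%N.

Definition has_exactly_simple_zeros (p : {poly C}) (N : nat) : Prop :=
  p != 0 /\
  exists s : seq C, [/\ uniq s, size s = N & forall z, (z \in s) = simple_zero p z].

End MatrixPolynomials.

Definition conjT (R : rcfType) m n (V : 'M[R[i]]_(m, n)) : 'M[R[i]]_(n, m) :=
  (map_mx (fun z => z^*) V)^T.

(* Main.v *)
Require Import Defs.
From mathcomp Require Import all_boot all_order all_algebra.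
From mathcomp Require Import fraction reals complex.
From mathcomp Require Import all_field.
From Stdlib Require Import Classical.
From mathcomp Require Import ring perm.
Set Implicit Arguments. Unset Strict Implicit. Unset Printing Implicit Defensive.
Import Order.TTheory GRing.Theory Num.Theory.
Local Open Scope ring_scope.


Section PolyPart.
Variable F : numClosedFieldType.

Lemma exists_notin (L : seq F) : exists x : F, x \notin L.
Proof.
apply/not_all_not_ex => H.
have sub : {subset [seq i%:R | i <- iota 0 (size L).+1] <= L}.
  move=> x /mapP [i _ ->]; have := H i%:R; by case: (_ \in _).
have U : uniq [seq (i%:R : F) | i <- iota 0 (size L).+1].
  rewrite map_inj_uniq ?iota_uniq // => i j /eqP; by rewrite eqr_nat => /eqP.
have := uniq_leq_size U sub; by rewrite size_map size_iota ltnn.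
Qed.

Lemma roots_list (p : {poly F}) : p != 0 ->
  exists rs : seq F, forall z, root p z = (z \in rs).
Proof.
move=> p0; have [rs Ers] := closed_field_poly_normal p.
exists rs => z; rewrite Ers rootZ ?root_prod_XsubC //.
by rewrite lead_coef_eq0.
Qed.

Lemma exists_nonroot (p : {poly F}) : p != 0 -> exists x, p.[x] != 0.
Proof.
move=> /roots_list [rs Hr]; have [x Hx] := exists_notin rs.
by exists x; move: Hx; rewrite -Hr.
Qed.

Lemma avoid_gen (A : eqType) (xs : seq A) (P : A -> F -> Prop) :
  (forall a, a \in xs -> exists q : {poly F}, q != 0 /\ forall s, q.[s] != 0 -> P a s) ->
  exists s, forall a, a \in xs -> P a s.
Proof.
move=> H.
suff [Q [Q0 HQ]] : exists Q : {poly F}, Q != 0 /\ forall s, Q.[s] != 0 -> forall a, a \in xs -> P a s.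
  by have [s Hs] := exists_nonroot Q0; exists s; apply: HQ.
elim: xs H => [|a xs IH] H.
  by exists 1; split; [exact: oner_neq0| move=> s _ a].
have [q [q0 Hq]] := H a (mem_head _ _).
have [Q [Q0 HQ]] : exists Q : {poly F}, Q != 0 /\ forall s, Q.[s] != 0 -> forall a, a \in xs -> P a s.
  by apply: IH => b bin; apply: H; rewrite in_cons bin orbT.
exists (q * Q); split; first by rewrite mulf_neq0.
move=> s; rewrite hornerM mulf_eq0 negb_or => /andP [qs Qs] b.
rewrite in_cons => /orP [/eqP -> | bin]; [exact: Hq | exact: HQ].
Qed.

Lemma coprime_noroot (p q : {poly F}) :
  (forall z, root p z -> ~~ root q z) -> coprimep p q.
Proof.
move=> H; rewrite /coprimep; apply/negPn/negP => /closed_rootP [x].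
by rewrite root_gcd => /andP [/H /negP].
Qed.

Lemma simple_zeros_count (f : {poly F}) (M : nat) :
  size f = M.+1 -> (forall z, root f z -> ~~ root f^`() z) ->
  has_exactly_simple_zeros f M.
Proof.
move=> sf Hd.
have f0 : f != 0 by rewrite -size_poly_eq0 sf.
split => //.
have [rs Ers] := closed_field_poly_normal f.
have lc0 : lead_coef f != 0 by rewrite lead_coef_eq0.
have sep : separable_poly f.
  rewrite unlock; apply: coprime_noroot => z; exact: Hd.
have Urs : uniq rs.
  move: sep; rewrite Ers -mul_polyC separable_mul => /and3P [_ + _].
  by rewrite separable_prod_XsubC.
exists rs; split => //.
  move: sf; rewrite Ers size_scale // size_prod_XsubC; by case.
move=> z; rewrite /simple_zero.
have rootE : root f z = (z \in rs).
  by rewrite Ers rootZ // root_prod_XsubC.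
rewrite -rootE; case rz: (root f z); last by rewrite mupNroot ?rz.
apply/esym/eqP/anti_leq/andP; split.
  rewrite mup_leq //; apply/negP => /dvdpP [g Eg].
  move: (Hd z rz); rewrite Eg derivM => /negP; apply.
  rewrite /root !hornerE deriv_exp /= !hornerE subrr; by rewrite !(mul0r, mulr0, expr0n, addr0, add0r, mul0rn).
by rewrite mup_geq // expr1 dvdp_XsubCl.
Qed.


Lemma size_gt_coef (p : {poly F}) i : p`_i != 0 -> (i < size p)%N.
Proof.
move=> H; rewrite ltnNge; apply/negP => /leq_sizeP /(_ i (leqnn _)) /eqP.
by rewrite (negPf H).
Qed.

Lemma solve_lin (a b t : F) : b != 0 -> a + t * b = 0 -> t = - (a / b).
Proof.
move=> b0 E; have -> : a = - (t * b) by apply/eqP; rewrite -addr_eq0 E.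
by rewrite mulNr opprK mulfK.
Qed.

Lemma pencil (p q : {poly F}) (M : nat) :
  size p = M.+1 -> (size q <= M.+1)%N -> (forall z, root p z -> ~~ root q z) ->
  exists t, size (p + t *: q) = M.+1 /\ has_exactly_simple_zeros (p + t *: q) M.
Proof.
case: M => [|M] sp sq Hpq.
  exists 0; rewrite scale0r addr0; split => //; apply: simple_zeros_count => // z rz.
  have /size_poly1P [c c0 pc] : size p == 1%N by rewrite sp.
  by move: rz; rewrite pc rootC (negPf c0).
have p0 : p != 0 by rewrite -size_poly_eq0 sp.
have lp : p`_M.+1 != 0.
  by have := p0; rewrite -lead_coef_eq0 /lead_coef sp.
have cop : coprimep p q by apply: coprime_noroot.
set Wr := p^`() * q - p * q^`().
have Wr0 : Wr != 0.
  apply/negP => /eqP /eqP; rewrite subr_eq0 => /eqP E.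
  have : p %| p^`() * q by rewrite E dvdp_mulr.
  rewrite Gauss_dvdpl // => dp.
  have d0 : p^`() = 0.
    apply/eqP; apply/negPn/negP => d0.
    by have := dvdp_leq d0 dp; rewrite leqNgt lt_size_deriv.
  move: (congr1 (fun r : {poly F} => r`_M) d0); rewrite coef_deriv coef0 => /eqP.
  by rewrite mulrn_eq0 /= (negPf lp).
have [rs Hrs] := roots_list Wr0.
set L := [seq - (p.[z] / q.[z]) | z <- rs] ++ [:: - (p`_M.+1 / q`_M.+1)].
have [t tL] := exists_notin L.
exists t.
have lf : (p + t *: q)`_M.+1 != 0.
  rewrite coefD coefZ.
  case q0: (q`_M.+1 == 0); first by rewrite (eqP q0) mulr0 addr0.
  apply/negP => /eqP E; move: tL; rewrite mem_cat mem_seq1 negb_or => /andP [_ /negP]; apply.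
  by apply/eqP; apply: solve_lin; rewrite ?q0 ?E.
have sf : size (p + t *: q) = M.+2.
  apply/anti_leq/andP; split; last exact: size_gt_coef.
  rewrite (leq_trans (size_add _ _)) // geq_max sp leqnn /=.
  exact: leq_trans (size_scale_leq _ _) sq.
split => //; apply: simple_zeros_count => //.
move=> z rz; apply/negP => rd.
move: rz rd; rewrite derivD derivZ /root !hornerE => /eqP e1 /eqP e2.
have qz : q.[z] != 0.
  apply/negP => /eqP qz; have := Hpq z; rewrite /root qz eqxx /=.
  by move: e1; rewrite qz mulr0 addr0 => ->; rewrite eqxx => /(_ isT).
have tE : t = - (p.[z] / q.[z]).
  by apply: solve_lin => //; apply/eqP.
have : z \in rs.
  rewrite -Hrs /root /Wr !hornerE.
  have e1' : p.[z] = - (t * q.[z]) by apply/eqP; rewrite -addr_eq0 e1.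
  have e2' : p^`().[z] = - (t * q^`().[z]) by apply/eqP; rewrite -addr_eq0 e2.
  rewrite e1' e2'; apply/eqP; ring.
move=> zin; move: tL; rewrite mem_cat negb_or => /andP [/negP H _]; apply: H.
by rewrite tE; apply: map_f.
Qed.


Lemma exact_scale (f : {poly F}) (c : F) M : c != 0 ->
  has_exactly_simple_zeros f M -> has_exactly_simple_zeros (f * c%:P) M.
Proof.
move=> c0 [f0 [s [Us ss Hs]]]; split; first by rewrite mulf_neq0 ?polyC_eq0.
exists s; split => // z; rewrite Hs /simple_zero mupMl // rootC //.
Qed.

End PolyPart.


Section DetCoef.
Variable F : numClosedFieldType.

Lemma coefM_bound (p q : {poly F}) a b :
  (size p <= a.+1)%N -> (size q <= b.+1)%N ->
  (size (p * q)%R <= (a + b).+1)%N /\ (p * q)`_(a + b) = p`_a * q`_b.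
Proof.
move=> sp sq; split.
  rewrite (leq_trans (size_mul_leq _ _)) //.
  by rewrite -subn1 leq_subLR add1n -addnS -addSn leq_add.
rewrite coefM (bigD1 (@Ordinal (a + b).+1 a (leq_addr b a))) //= addKn big1 ?addr0 // => j ja.
have [jlt|jge] := ltnP j a.
  have : (size q <= a + b - j)%N.
    by rewrite (leq_trans sq) // ltn_subRL ltn_add2r.
  by move/leq_sizeP => /(_ _ (leqnn _)) ->; rewrite mulr0.
have jgt : (a < j)%N.
  by rewrite ltn_neqAle jge andbT; apply: contra ja => /eqP aj; apply/eqP/val_inj.
by move: (leq_trans sp jgt) => /leq_sizeP /(_ _ (leqnn _)) ->; rewrite mul0r.
Qed.

Lemma prod_bound_seq (I : Type) (r : seq I) (f : I -> {poly F}) (d : I -> nat) :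
  (forall i, size (f i) <= (d i).+1)%N ->
  (size (\prod_(i <- r) f i)%R <= (\sum_(i <- r) d i).+1)%N /\
  (\prod_(i <- r) f i)`_(\sum_(i <- r) d i)%N = \prod_(i <- r) (f i)`_(d i).
Proof.
move=> H; elim: r => [|i r [IH1 IH2]].
  by rewrite !big_nil size_poly1 coef1.
rewrite !big_cons; have [h1 h2] := coefM_bound (H i) IH1.
by split => //; rewrite h2 IH2.
Qed.

Lemma det_coef N (B : 'M[{poly F}]_N) (d : 'I_N -> nat) :
  (forall i j, size (B i j) <= (d i).+1)%N ->
  (size (\det B) <= (\sum_i d i).+1)%N /\
  (\det B)`_(\sum_i d i)%N = \det (\matrix_(i, j) (B i j)`_(d i)).
Proof.
move=> H; split.
  rewrite /determinant; apply: (big_ind (fun p : {poly F} => (size p <= (\sum_i d i).+1)%N)).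
  - by rewrite size_poly0.
  - by move=> p q sp sq; rewrite (leq_trans (size_add _ _)) // geq_max sp sq.
  move=> s _; rewrite mulr_sign.
  have [h1 _] := prod_bound_seq (index_enum _) (fun i => H i ((s : {perm 'I_N}) i)).
  by case: (odd_perm s); rewrite ?size_opp.
rewrite /determinant coef_sum; apply: eq_bigr => s _.
rewrite !mulr_sign.
have [_ h2] := prod_bound_seq (index_enum _) (fun i => H i ((s : {perm 'I_N}) i)).
under [in RHS]eq_bigr do rewrite mxE.
by case: (odd_perm s); rewrite ?coefN h2.
Qed.

Lemma horner_det N (B : 'M[{poly F}]_N) (z : F) :
  (\det B).[z] = \det (mxpoly_eval B z).
Proof.
by rewrite -horner_evalE -det_map_mx.
Qed.

End DetCoef.


Section LinAlg.
Variable F : numClosedFieldType.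

Lemma rank_col_mx p q N (A : 'M[F]_(p, N)) (B : 'M[F]_(q, N)) :
  \rank (col_mx A B) = \rank (A + B)%MS.
Proof. by rewrite addsmxE. Qed.

Lemma row_free_col_mx p N (A : 'M[F]_(p, N)) (v : 'rV_N) :
  row_free (col_mx A v) = row_free A && ~~ (v <= A)%MS.
Proof.
rewrite /row_free rank_col_mx.
case vA: (v <= A)%MS.
  have -> : \rank (A + v)%MS = \rank A by have /addsmx_idPl -> := vA.
  rewrite andbF; apply/negbTE; rewrite neq_ltn; apply/orP; left.
  by rewrite addn1 ltnS rank_leq_row.
have lt : (\rank A < \rank (A + v)%MS)%N.
  have := mxrank_leqif_sup (addsmxSl A v).
  by rewrite addsmx_sub submx_refl vA => /ltn_leqif.
have le : (\rank (A + v)%MS <= \rank A + 1)%N.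
  have := mxrank_adds_leqif A v => /leqifP; rewrite rank_rV.
  by case: ifP => _ H; [rewrite (eqP H) leq_add2l leq_b1 | rewrite (leq_trans (ltnW H)) // leq_add2l leq_b1].
have -> : \rank (A + v)%MS = (\rank A).+1 by apply/eqP; rewrite eqn_leq lt andbT; move: le; rewrite addn1.
by rewrite andbT addn1 eqSS.
Qed.

Lemma evE p N (A : 'M[{poly F}]_(p, N)) z : mxpoly_eval A z = map_mx (horner_eval z) A.
Proof. by apply/matrixP => i j; rewrite !mxE. Qed.

Lemma ev_mulC p N r (B : 'M[{poly F}]_(p, N)) (C : 'M[F]_(N, r)) z :
  mxpoly_eval (B *m map_mx polyC C) z = mxpoly_eval B z *m C.
Proof.
rewrite !evE map_mxM; congr (_ *m _); apply/matrixP => i j; rewrite !mxE; exact: hornerC.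
Qed.

Lemma ev_col_mxC p q N (B : 'M[{poly F}]_(p, N)) (V : 'M[F]_(q, N)) z :
  mxpoly_eval (col_mx B (map_mx polyC V)) z = col_mx (mxpoly_eval B z) V.
Proof.
rewrite /mxpoly_eval map_col_mx; congr col_mx; apply/matrixP => i j; by rewrite !mxE hornerC.
Qed.

Lemma generic_free p N (B : 'M[{poly F}]_(p, N)) z0 :
  row_free (mxpoly_eval B z0) ->
  exists q : {poly F}, q != 0 /\ forall z, q.[z] != 0 -> row_free (mxpoly_eval B z).
Proof.
move=> fr.
have : row_full (mxpoly_eval B z0)^T by rewrite /row_full mxrank_tr.
move=> /row_fullP [D HD].
have HC : mxpoly_eval B z0 *m D^T = 1%:M by rewrite -[LHS]trmxK trmx_mul trmxK HD trmx1.
exists (\det (B *m map_mx polyC D^T)); split.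
  by apply/negP => /eqP H; move: (congr1 (fun q => q.[z0]) H); rewrite horner_det ev_mulC HC det1 horner0 => /eqP; rewrite oner_eq0.
move=> z; rewrite horner_det ev_mulC => dz.
have : row_free (mxpoly_eval B z *m D^T) by rewrite row_free_unit unitmxE unitfE.
rewrite /row_free => /eqP H; rewrite eqn_leq rank_leq_row /= -{1}H.
exact: mxrankM_maxl.
Qed.

Lemma nonzero_row m N (K : 'M[F]_(m, N)) : K != 0 -> exists i, row i K != 0.
Proof.
move=> K0; apply/not_all_not_ex => H; move/negP: K0; apply; apply/eqP/row_matrixP => i.
by rewrite row0; apply/eqP; apply/negPn/negP => /(H i).
Qed.

Lemma avoid_sub N (Us : seq 'M[F]_N) :
  (forall U, U \in Us -> (\rank U < N)%N) ->
  exists v : 'rV[F]_N, forall U, U \in Us -> ~~ (v <= U)%MS.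
Proof.
move=> HU.
pose vs (s : F) : 'rV[F]_N := \row_j s ^+ j.
suff [s Hs] : exists s, forall U, U \in Us -> ~~ (vs s <= U)%MS by exists (vs s).
apply: avoid_gen => U /HU rU.
have K0 : kermx U^T != 0.
  by rewrite -mxrank_eq0 mxrank_ker mxrank_tr subn_eq0 -ltnNge.
have [i ci] := nonzero_row K0.
set c := row i (kermx U^T) in ci.
have cU : c *m U^T = 0 by apply/eqP; rewrite -sub_kermx row_sub.
exists (\sum_(j < N) (c 0 j)%:P * 'X^j); split.
  have [j cj] : exists j, c 0 j != 0.
    apply/not_all_not_ex => H; move/negP: ci; apply; apply/eqP/matrixP => a b.
    by rewrite [a]ord1 [RHS]mxE; apply/eqP; apply/negPn/negP => cb; case: (H b cb).
  apply/negP => /eqP P0; move: (congr1 (fun q : {poly F} => q`_j) P0).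
  rewrite coef_sum (bigD1 j) //= big1 ?addr0 => [|j' jj'].
    by rewrite coefCM coefXn eqxx mulr1 coef0 => /eqP; rewrite (negPf cj).
  rewrite coefCM coefXn; case: eqP => [E|]; last by rewrite mulr0.
  by case/eqP: jj'; apply: val_inj.
move=> s; rewrite horner_sum => Hs; apply/negP => /submxP [D ED].
have : vs s *m c^T = 0 by rewrite ED -mulmxA -(trmxK U) -trmx_mul cU trmx0 mulmx0.
move/matrixP => /(_ 0 0); rewrite !mxE => E; move/negP: Hs; apply; apply/eqP.
apply: (etrans _ E); apply: eq_bigr => j _; by rewrite /vs !mxE hornerM hornerC hornerXn mulrC.
Qed.

End LinAlg.


Section Extend.
Variable F : numClosedFieldType.

Lemma rank_swap k i N (A : 'M[F]_(k, N)) (v : 'rV_N) (V : 'M_(i, N)) :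
  \rank (col_mx A (col_mx v V)) = \rank (col_mx (col_mx A V) v).
Proof.
have e1 : (col_mx A (col_mx v V) :=: A + (v + V))%MS :=
  eqmx_trans (eqmx_sym (addsmxE _ _)) (adds_eqmx (eqmx_refl A) (eqmx_sym (addsmxE v V))).
have e2 : (col_mx (col_mx A V) v :=: (A + V) + v)%MS :=
  eqmx_trans (eqmx_sym (addsmxE _ _)) (adds_eqmx (eqmx_sym (addsmxE A V)) (eqmx_refl v)).
by rewrite e1 e2 [(v + V)%MS]addsmxC addsmxA.
Qed.

Lemma one_bad r N (X : 'M[F]_(r, N)) (a b : 'rV_N) :
  ~~ ((a <= X)%MS && (b <= X)%MS) ->
  exists q : {poly F}, q != 0 /\ forall t, q.[t] != 0 -> ~~ ((a + t *: b)%R <= X)%MS.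
Proof.
move=> nab.
case: (classic (exists t1, ((a + t1 *: b)%R <= X)%MS)) => [[t1 H1]|H]; last first.
  exists 1; split; first exact: oner_neq0.
  by move=> t _; apply/negP => Ht; apply: H; exists t.
exists ('X - t1%:P); split; first by rewrite polyXsubC_eq0.
move=> t; rewrite !hornerE subr_eq0 => tt1; apply/negP => Ht.
have bX : (b <= X)%MS.
  have : (((t - t1) *: b)%R <= X)%MS.
    have -> : (t - t1) *: b = (a + t *: b) - (a + t1 *: b).
      by rewrite opprD addrACA subrr add0r scalerBl.
    apply: addmx_sub; first exact: Ht.
    by rewrite -scaleN1r; apply: scalemx_sub.
  by move/(scalemx_sub (t - t1)^-1); rewrite scalerA mulVf ?subr_eq0 // scale1r.
have aX : (a <= X)%MS.
  have -> : a = (a + t1 *: b) - t1 *: b by rewrite addrK.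
  apply: addmx_sub; first exact: H1.
  by rewrite -scaleN1r scalerA; apply: scalemx_sub.
by move/negP: nab; apply; rewrite aX bX.
Qed.


Lemma sub_col_mxl m1 m2 N (X : 'M[F]_(m1, N)) (Y : 'M[F]_(m2, N)) : (X <= col_mx X Y)%MS.
Proof. by rewrite -addsmxE addsmxSl. Qed.
Lemma sub_col_mxr m1 m2 N (X : 'M[F]_(m1, N)) (Y : 'M[F]_(m2, N)) : (Y <= col_mx X Y)%MS.
Proof. by rewrite -addsmxE addsmxSr. Qed.

Lemma extend_one p N (B : 'M[{poly F}]_(p, N)) (Hc : 'M[F]_(p, N)) :
  (p.+2 <= N)%N -> (forall z, row_free (mxpoly_eval B z)) -> row_free Hc ->
  exists v : 'rV[F]_N,
    (forall z, row_free (col_mx (mxpoly_eval B z) v)) /\ row_free (col_mx Hc v).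
Proof.
move=> pN HB HH.
have pN1 : (p < N)%N := ltnW pN.
have HU1 : forall U, U \in [:: <<mxpoly_eval B 0>>%MS] -> (\rank U < N)%N.
  by move=> U; rewrite mem_seq1 => /eqP ->; rewrite genmxE (eqP (HB 0)).
have [a Ha] := avoid_sub HU1.
have a0 := Ha _ (mem_head _ _); rewrite genmxE in a0.
set Ba := col_mx B (map_mx polyC a).
have evBa z : mxpoly_eval Ba z = col_mx (mxpoly_eval B z) a := ev_col_mxC B a z.
have [qa [qa0 Hqa]] := @generic_free F _ _ Ba 0 (etrans (congr1 _ (evBa 0)) (etrans (row_free_col_mx _ _) (introT andP (conj (HB 0) a0)))).
have [z1 qz1] := exists_nonroot qa0.
have [rsa Hrsa] := roots_list qa0.
have HU2 : forall U, U \in (<<col_mx (mxpoly_eval B z1) a>>%MS :: <<Hc>>%MS :: [seq <<mxpoly_eval B z>>%MS | z <- rsa]) -> (\rank U < N)%N.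
  move=> U; rewrite !in_cons => /or3P [/eqP ->| /eqP -> | /mapP [z _ ->]]; rewrite genmxE.
  - by have := Hqa z1 qz1; rewrite evBa /row_free => /eqP ->; rewrite addn1.
  - by rewrite (eqP HH).
  - by rewrite (eqP (HB z)).
have [b Hb] := avoid_sub HU2.
have b1 := Hb _ (mem_head _ _); rewrite genmxE in b1.
have b2 : ~~ (b <= Hc)%MS.
  by have := Hb <<Hc>>%MS; rewrite genmxE; apply; rewrite !in_cons eqxx orbT.
set Bab := col_mx Ba (map_mx polyC b).
have evBab z : mxpoly_eval Bab z = col_mx (col_mx (mxpoly_eval B z) a) b.
  by rewrite /Bab ev_col_mxC evBa.
have fr1 : row_free (mxpoly_eval Bab z1).
  by rewrite evBab row_free_col_mx b1 andbT; have := Hqa z1 qz1; rewrite evBa.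
have [qab [qab0 Hqab]] := generic_free fr1.
have [rsab Hrsab] := roots_list qab0.
pose P (o : option F) (t : F) := match o with
  | None => ~~ ((a + t *: b)%R <= Hc)%MS
  | Some z => ~~ ((a + t *: b)%R <= mxpoly_eval B z)%MS end.
have HP : forall o, o \in (None :: [seq Some z | z <- rsab]) ->
    exists q : {poly F}, q != 0 /\ forall s, q.[s] != 0 -> P o s.
  move=> [z|] Hin /=; apply: one_bad; apply/negP => /andP [aX bX].
    have zin : z \in rsa.
      rewrite -Hrsa; apply/negPn/negP => nz; move: (Hqa z nz).
      by rewrite evBa row_free_col_mx aX andbF.
    have zb : <<mxpoly_eval B z>>%MS \in (<<col_mx (mxpoly_eval B z1) a>>%MS :: <<Hc>>%MS :: [seq <<mxpoly_eval B z>>%MS | z <- rsa]).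
      by rewrite !in_cons map_f ?orbT.
    by move: (Hb _ zb); rewrite genmxE bX.
  by move/negP: b2; apply.
have [t Ht] := avoid_gen HP.
exists (a + t *: b); split; last first.
  by rewrite row_free_col_mx HH; apply: (Ht None); rewrite mem_head.
move=> z; rewrite row_free_col_mx HB /=.
case qz: (qab.[z] != 0); last first.
  apply: (Ht (Some z)); rewrite in_cons; apply/orP; right; apply: map_f.
  by rewrite -Hrsab; apply/negPn; rewrite qz.
have := Hqab z qz; rewrite evBab !row_free_col_mx => /andP [/andP [_ aX] bXa].
apply/negP => vX.
case t0: (t == 0).
  by move: vX; rewrite (eqP t0) scale0r addr0 => vX; move/negP: aX; apply.
move/negP: bXa; apply.
have -> : b = t^-1 *: ((a + t *: b) - a) by rewrite addrC addKr scalerA mulVf ?t0 // scale1r.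
apply: scalemx_sub; apply: addmx_sub.
  exact: submx_trans vX (sub_col_mxl _ _).
by rewrite -scaleN1r; apply: scalemx_sub; apply: sub_col_mxr.
Qed.


Lemma row_free_swap k i N (A : 'M[F]_(k, N)) (v : 'rV_N) (V : 'M_(i, N)) :
  row_free (col_mx A (col_mx v V)) = row_free (col_mx (col_mx A V) v).
Proof.
have E : (k + (1 + i) = k + i + 1)%N by rewrite addnA addnAC.
by rewrite /row_free rank_swap E.
Qed.

Lemma row_free_col_mx0 k N (A : 'M[F]_(k, N)) (V : 'M_(0, N)) :
  row_free (col_mx A V) = row_free A.
Proof. by rewrite /row_free rank_col_mx flatmx0 addsmx0 addn0. Qed.

Lemma extend_many k N (B : 'M[{poly F}]_(k, N)) (Hc : 'M[F]_(k, N)) i :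
  (k + i < N)%N -> (forall z, row_free (mxpoly_eval B z)) -> row_free Hc ->
  exists V : 'M[F]_(i, N),
    (forall z, row_free (col_mx (mxpoly_eval B z) V)) /\ row_free (col_mx Hc V).
Proof.
move=> + HB HH; elim: i => [|i IH] ki.
  by exists 0; split => [z|]; rewrite row_free_col_mx0.
have [|V [HV1 HV2]] := IH; first by rewrite (ltn_trans _ ki) // ltn_add2l.
have [|||v [Hv1 Hv2]] := @extend_one _ _ (col_mx B (map_mx polyC V)) (col_mx Hc V).
- by rewrite -addnS.
- by move=> z; rewrite ev_col_mxC.
- exact: HV2.
exists (col_mx v V : 'M_(1 + i, N)); split => [z|]; rewrite row_free_swap //.
by have := Hv1 z; rewrite ev_col_mxC.
Qed.

End Extend.


Section Core.
Variable F : numClosedFieldType.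
Variables (k l : nat) (T : 'M[{poly F}]_(k, k + l)) (m : 'I_k -> nat).
Hypothesis Tsize : forall i j, (size (T i j) <= (m i).+1)%N.
Let Hm := \matrix_(i, j) (T i j)`_(m i).
Let M := (\sum_i m i)%N.
Let d (i : 'I_(k + l)) : nat := if split i is inl i' then m i' else 0%N.

Lemma det_stack (V : 'M[F]_(l, k + l)) :
  (size (\det (col_mx T (map_mx polyC V))) <= M.+1)%N /\
  (\det (col_mx T (map_mx polyC V)))`_M = \det (col_mx Hm V).
Proof.
have Hs : forall i j, (size (col_mx T (map_mx polyC V) i j) <= (d i).+1)%N.
  move=> i j; rewrite -(splitK i) /d; case: (split i) => i'; rewrite unsplitK /=.
    by rewrite col_mxEu.
  by rewrite col_mxEd mxE size_polyC leq_b1.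
have EM : (\sum_i d i)%N = M.
  rewrite big_split_ord /= [X in (_ + X)%N]big1 ?addn0; last first.
    by move=> i _; rewrite /d (unsplitK (inr i : 'I_k + 'I_l)).
  by apply: eq_bigr => i _; rewrite /d (unsplitK (inl i : 'I_k + 'I_l)).
have [h1 h2] := det_coef Hs; rewrite EM in h1 h2; split => //.
rewrite h2; congr (\det _); apply/matrixP => i j.
rewrite mxE -(splitK i) /d; case: (split i) => i'; rewrite unsplitK /=.
  by rewrite !col_mxEu mxE.
by rewrite !col_mxEd !mxE coefC.
Qed.


Lemma convert (H0 : 'M[F]_(k, k + l)) (V : 'M[F]_(l, k + l)) :
  col_mx H0 V \in unitmx ->
  exists W : 'M[F]_(k + l, k), exists c : F, c != 0 /\
    \det (T *m map_mx polyC W) = \det (col_mx T (map_mx polyC V)) * c%:P.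
Proof.
move=> uG.
set Q := invmx (col_mx H0 V).
have GQ : col_mx H0 V *m Q = 1%:M by rewrite mulmxV.
have VQ : V *m Q = row_mx 0 1%:M.
  by move: GQ; rewrite mul_col_mx scalar_mx_block block_mxEv => /eq_col_mx [_ ->].
exists (lsubmx Q), (\det Q); split.
  by rewrite -unitfE -unitmxE unitmx_inv.
have E : col_mx T (map_mx polyC V) *m map_mx polyC Q =
    block_mx (T *m map_mx polyC (lsubmx Q)) (T *m map_mx polyC (rsubmx Q)) 0 1%:M.
  rewrite mul_col_mx -map_mxM VQ map_row_mx map_mx0 map_mx1.
  by rewrite -{1}[Q](hsubmxK Q) map_row_mx mul_mx_row block_mxEv.
have := congr1 determinant E; rewrite det_mulmx det_ublock det1 mulr1 => <-.
by rewrite det_map_mx.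
Qed.

End Core.

Section StepA.
Variable F : numClosedFieldType.

Lemma unit_of_free N (A : 'M[F]_N) : row_free A -> \det A != 0.
Proof. by rewrite row_free_unit unitmxE unitfE. Qed.

Lemma stepA k l (T : 'M[{poly F}]_(k, k + l)) (m : 'I_k -> nat) :
  (forall i j, (size (T i j) <= (m i).+1)%N) ->
  (forall z, row_free (mxpoly_eval T z)) ->
  row_free (\matrix_(i, j) (T i j)`_(m i)) ->
  exists V : 'M[F]_(l, k + l),
    col_mx (\matrix_(i, j) (T i j)`_(m i)) V \in unitmx /\
    has_exactly_simple_zeros (\det (col_mx T (map_mx polyC V))) (\sum_i m i)%N.
Proof.
case: l T => [|l'] T Ts HT HH; set Hm := \matrix_(i, j) _.
  exists 0; have [h1 h2] := det_stack Ts (0 : 'M_(0, k + 0)).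
  have u : col_mx Hm 0 \in unitmx by rewrite -row_free_unit row_free_col_mx0.
  split => //.
  set p := \det _ in h1 h2 *.
  have sp : size p = (\sum_i m i)%N.+1.
    apply/anti_leq; rewrite h1 /=; apply: size_gt_coef.
    by rewrite h2 -unitfE -unitmxE.
  have [||t [_ Ht]] := @pencil F p 0 _ sp; first by rewrite size_poly0.
    move=> z; rewrite /root horner_det ev_col_mxC => /eqP D; exfalso.
    have : row_free (col_mx (mxpoly_eval T z) (0 : 'M_(0, k + 0))) by rewrite row_free_col_mx0 HT.
    by move/unit_of_free; rewrite D eqxx.
  by rewrite scaler0 addr0 in Ht.
set M := (\sum_i m i)%N.
have kl : (k + l' < k + l'.+1)%N by rewrite ltn_add2l.
have [V' [HV1 HV2]] := @extend_many F k (k + l'.+1) T Hm l' kl HT HH.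
have HU1 : forall U, U \in [:: <<col_mx Hm V'>>%MS] -> (\rank U < k + l'.+1)%N.
  by move=> U; rewrite mem_seq1 => /eqP ->; rewrite genmxE (eqP HV2).
have [a Ha] := avoid_sub HU1.
have a0 := Ha _ (mem_head _ _); rewrite genmxE in a0.
pose G (v : 'rV[F]_(k + l'.+1)) := col_mx T (map_mx polyC (col_mx v V' : 'M_(1 + l', _))).
have [h1a h2a] := det_stack Ts (col_mx a V' : 'M_(1 + l', _)).
set p := \det _ in h1a h2a.
have sp : size p = M.+1.
  apply/anti_leq; rewrite h1a /=; apply: size_gt_coef; rewrite h2a.
  by apply: unit_of_free; rewrite row_free_swap row_free_col_mx HV2 a0.
have p0 : p != 0 by rewrite -size_poly_eq0 sp.
have [rs Hrs] := roots_list p0.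
have HU2 : forall U, U \in [seq <<col_mx (mxpoly_eval T z) V'>>%MS | z <- rs] -> (\rank U < k + l'.+1)%N.
  by move=> U /mapP [z _ ->]; rewrite genmxE (eqP (HV1 z)).
have [b Hb] := avoid_sub HU2.
have [h1b h2b] := det_stack Ts (col_mx b V' : 'M_(1 + l', _)).
set q := \det _ in h1b h2b.
have Hpq : forall z, root p z -> ~~ root q z.
  move=> z; rewrite Hrs => zin; rewrite /root /q horner_det ev_col_mxC.
  apply: unit_of_free; rewrite row_free_swap row_free_col_mx HV1 /=.
  by have := Hb _ (map_f (fun z => <<col_mx (mxpoly_eval T z) V'>>%MS) zin); rewrite genmxE.
have [t [sf Ht]] := pencil sp h1b Hpq.
set i0 : 'I_(k + (1 + l')) := rshift k (lshift l' (ord0 : 'I_1)).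
have Goff : forall v w i j, i != i0 -> G v i j = G w i j.
  move=> v w i j; rewrite /G !map_col_mx -(splitK i); case: (split i) => i1 /=.
    by rewrite !col_mxEu.
  rewrite !col_mxEd -(splitK i1); case: (split i1) => i2 /=.
    by rewrite [i2]ord1 eqxx.
  by rewrite !col_mxEd.
have lin : \det (G (a + t *: b)) = p + t *: q.
  rewrite (@determinant_multilinear _ _ _ (G a) (G b) i0 1 t%:P).
  - by rewrite mul1r mul_polyC.
  - apply/rowP => j; rewrite !(col_mxEd, col_mxEu, mxE).
    by rewrite mul1r polyCD polyCM.
  - by apply/matrixP => i j; rewrite [LHS]mxE [RHS]mxE; apply: Goff; rewrite eq_sym neq_lift.
  - by apply/matrixP => i j; rewrite [LHS]mxE [RHS]mxE; apply: Goff; rewrite eq_sym neq_lift.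
exists (col_mx (a + t *: b) V' : 'M_(1 + l', _)); split; last by rewrite -/(G _) lin.
have [_ h2] := det_stack Ts (col_mx (a + t *: b) V' : 'M_(1 + l', _)).
rewrite unitmxE unitfE -h2 -/(G _) lin.
have : (p + t *: q) != 0 by rewrite -size_poly_eq0 sf.
by rewrite -lead_coef_eq0 /lead_coef sf.
Qed.

End StepA.


Section Minimal.
Variable F : numClosedFieldType.
Local Notation tf := (@FracField.tofrac {poly F}).

Lemma reduce m0 n k (P : 'M[{poly F}]_(m0, n)) (S : 'M[{poly F}]_(n, k)) :
  right_minimal_basis P S ->
  forall (j : 'I_k) (y : 'cV[{poly F}]_n) (al : 'cV[ratfun F]_k),
  al j 0 != 0 -> fracmx y = fracmx S *m al ->
  (forall r, (size (y r ord0) <= vec_deg (col j S))%N) -> False.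
Proof.
move=> [[Hnull Hrank Hspan] Hmin] j y al aj Ey Hy.
set T := \matrix_(r, i) if i == j then y r 0 else S r i.
have colT i : i != j -> col i T = col i S.
  by move=> ij; apply/matrixP => r c; rewrite !mxE (negPf ij).
have colTj : col j T = y.
  by apply/matrixP => r c; rewrite !mxE eqxx [c]ord1.
have fcol (A : 'M[{poly F}]_(n, k)) i : col i (fracmx A) = fracmx (col i A).
  by rewrite /fracmx map_col.
have PS : fracmx P *m fracmx S = 0.
  apply/matrixP => r i; have := Hnull i; rewrite /in_right_nullspace => /matrixP /(_ r 0).
  by rewrite !mxE => E; apply: (etrans _ E); apply: eq_bigr => c _; rewrite !mxE.
have freeS : row_free (fracmx S)^T by rewrite /row_free mxrank_tr Hrank.
have y0 : y != 0.
  apply/negP => /eqP y0; move: Ey; rewrite y0 /fracmx map_mx0 => /esym/eqP.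
  rewrite -trmx_eq0 trmx_mul mulmx_free_eq0 // trmx_eq0 => /eqP al0.
  by move: aj; rewrite al0 mxE eqxx.
have sub : ((fracmx S)^T <= (fracmx T)^T)%MS.
  apply/row_subP => i1; case: (eqVneq i1 j) => [->|ij]; last first.
    by rewrite -tr_col fcol -colT // -fcol tr_col row_sub.
  have Ey' : (fracmx y)^T = \sum_i al i 0 *: row i (fracmx S)^T.
    by rewrite Ey trmx_mul mulmx_sum_row; apply: eq_bigr => i2 _; rewrite mxE.
  rewrite (bigD1 j) //= in Ey'.
  have -> : row j (fracmx S)^T = (al j 0)^-1 *: ((fracmx y)^T - \sum_(i | i != j) al i 0 *: row i (fracmx S)^T).
    by rewrite Ey' addrK scalerA mulVf // scale1r.
  apply: scalemx_sub; apply: addmx_sub.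
    by rewrite -colTj -fcol tr_col row_sub.
  rewrite -scaleN1r; apply: scalemx_sub; apply: summx_sub => i' ij.
  by apply: scalemx_sub; rewrite -tr_col fcol -(colT i') // -fcol tr_col row_sub.
have basisT : right_nullspace_poly_basis P T.
  split.
  - move=> i2; rewrite /in_right_nullspace fcol; case: (eqVneq i2 j) => [->|ij].
      by rewrite colTj Ey mulmxA PS mul0mx.
    by rewrite (colT _ ij) -fcol; apply: Hnull.
  - apply/eqP; rewrite eqn_leq rank_leq_col /=; have := mxrankS sub; rewrite !mxrank_tr Hrank.
    done.
  - by move=> x /Hspan xS; apply: submx_trans xS sub.
have := Hmin _ _ basisT; apply/negP; rewrite -ltnNge /col_deg_sum.
rewrite (bigD1 j) //= [X in (_ < X)%N](bigD1 j) //=.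
have -> : (\sum_(i | i != j) vec_deg (col i T) = \sum_(i | i != j) vec_deg (col i S))%N.
  by apply: eq_bigr => i2 ij; rewrite colT.
rewrite ltn_add2r colTj /vec_deg.
have [r yr] : exists r, y r 0 != 0.
  apply/not_all_not_ex => H; move/negP: y0; apply; apply/eqP/matrixP => r c.
  by rewrite [c]ord1 mxE; apply/eqP/negPn/negP => /H.
have mx1 : (0 < \max_(i < n) size (y i ord0))%N.
  apply: (@leq_trans (size (y r 0))); first by rewrite size_poly_gt0.
  exact: (@leq_bigmax _ (fun i => size (y i ord0)) r).
have mx2 : (\max_(i < n) size (y i ord0) <= vec_deg (col j S))%N.
  by apply/bigmax_leqP => i2 _; apply: Hy.
by rewrite -ltnS prednK // (leq_ltn_trans mx2) ?ltnSn // -/(vec_deg _).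
Qed.

End Minimal.


Section Minimal2.
Variable F : numClosedFieldType.
Local Notation tf := (@FracField.tofrac {poly F}).

Lemma size_col n k (S : 'M[{poly F}]_(n, k)) r i :
  (size (S r i) <= (vec_deg (col i S)).+1)%N.
Proof.
rewrite /vec_deg; apply: leq_trans (leqSpred _).
by have := @leq_bigmax _ (fun r => size (col i S r ord0)) r; rewrite mxE.
Qed.

Lemma size_le_of_coef (p : {poly F}) d :
  (size p <= d.+1)%N -> p`_d = 0 -> (size p <= d)%N.
Proof.
rewrite leq_eqVlt => /orP [/eqP sp pd|//].
have : lead_coef p = 0 by rewrite /lead_coef sp.
by move/eqP; rewrite lead_coef_eq0 => /eqP ->; rewrite size_poly0.
Qed.

Lemma kernel_vec n k (A : 'M[F]_(n, k)) : (\rank A < k)%N ->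
  exists c : 'cV[F]_k, c != 0 /\ A *m c = 0.
Proof.
move=> rA.
have K0 : kermx A^T != 0.
  by rewrite -mxrank_eq0 mxrank_ker mxrank_tr subn_eq0 -ltnNge.
have [i ci] := nonzero_row K0.
exists (row i (kermx A^T))^T; split; first by rewrite trmx_eq0.
have : row i (kermx A^T) *m A^T = 0 by apply/eqP; rewrite -sub_kermx row_sub.
by move/(congr1 trmx); rewrite trmx_mul trmxK trmx0.
Qed.

Lemma argmax_supp k (c : 'cV[F]_k) (m : 'I_k -> nat) : c != 0 ->
  exists j, c j 0 != 0 /\ forall i, c i 0 != 0 -> (m i <= m j)%N.
Proof.
move=> c0.
have [i0 ci0] : exists i0, c i0 0 != 0.
  apply/not_all_not_ex => H; move/negP: c0; apply; apply/eqP/matrixP => a b.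
  by rewrite [b]ord1 [RHS]mxE; apply/eqP/negPn/negP => ca; case: (H a ca).
case: (@arg_maxnP _ i0 (fun i => c i 0 != 0) m ci0) => j cj Hj.
by exists j; split.
Qed.


Lemma eval_free m0 n k (P : 'M[{poly F}]_(m0, n)) (S : 'M[{poly F}]_(n, k)) :
  right_minimal_basis P S -> forall z, \rank (mxpoly_eval S z) = k.
Proof.
move=> HS z; apply/eqP; rewrite eqn_leq rank_leq_col /= leqNgt; apply/negP => rk.
have [c [c0 Hc]] := kernel_vec rk.
have [j [cj Hj]] := argmax_supp (fun i => vec_deg (col i S)) c0.
set d : {poly F} := 'X - z%:P.
have d0 : d != 0 by rewrite polyXsubC_eq0.
have td0 : tf d != 0 by rewrite tofrac_eq0.
set w := fun r => \sum_i S r i * (c i 0)%:P.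
have dw r : d %| w r.
  rewrite dvdp_XsubCl /root /w horner_sum.
  have := congr1 (fun A : 'cV[F]_n => A r 0) Hc; rewrite !mxE => E.
  by apply/eqP; apply: (etrans _ E); apply: eq_bigr => i _; rewrite !mxE hornerM hornerC.
apply: (@reduce F m0 n k P S HS j (\col_r (w r %/ d))
   ((tf d)^-1 *: map_mx (fun x => tf x%:P) c)).
- rewrite !mxE; apply: mulf_neq0; first by rewrite invr_eq0.
  by rewrite tofrac_eq0 polyC_eq0.
- apply/matrixP => r c1; rewrite [c1]ord1 !mxE.
  have E : tf (w r %/ d) = tf (w r) / tf d.
    by rewrite -[in RHS](divpK (dw r)) rmorphM /= (mulfK td0).
  rewrite E /w rmorph_sum mulr_suml; apply: eq_bigr => i _.
  by rewrite !mxE rmorphM /= [(_)^-1 * _]mulrC mulrA.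
- move=> r; rewrite mxE (size_divp _ d0) size_XsubC /= subn1 -subn1 leq_subLR add1n.
  rewrite /w; apply: (big_ind (fun p : {poly F} => (size p <= (vec_deg (col j S)).+1)%N)).
  + by rewrite size_poly0.
  + by move=> p q sp sq; rewrite (leq_trans (size_add _ _)) // geq_max sp sq.
  move=> i _; case ci: (c i 0 == 0); first by rewrite (eqP ci) mulr0 size_poly0.
  rewrite mulrC mul_polyC (leq_trans (size_scale_leq _ _)) // (leq_trans (size_col S r i)) //.
  by rewrite ltnS Hj ?ci.
Qed.


Lemma hc_free m0 n k (P : 'M[{poly F}]_(m0, n)) (S : 'M[{poly F}]_(n, k)) :
  right_minimal_basis P S ->
  \rank (\matrix_(r, i) (S r i)`_(vec_deg (col i S)) : 'M[F]_(n, k)) = k.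
Proof.
move=> HS; set m := fun i => vec_deg (col i S).
set H := \matrix_(r, i) _.
apply/eqP; rewrite eqn_leq rank_leq_col /= leqNgt; apply/negP => rk.
have [c [c0 Hc]] := kernel_vec rk.
have [j [cj Hj]] := argmax_supp m c0.
set e := fun i => (m j - m i)%N.
set w := fun r => \sum_i S r i * ((c i 0)%:P * 'X^(e i)).
apply: (@reduce F m0 n k P S HS j (\col_r w r) (\col_i tf ((c i 0)%:P * 'X^(e i)))).
- rewrite mxE /e subnn expr0 mulr1 tofrac_eq0 polyC_eq0; exact: cj.
- apply/matrixP => r c1; rewrite [c1]ord1 !mxE /w rmorph_sum; apply: eq_bigr => i _.
  by rewrite !mxE rmorphM.
move=> r; rewrite mxE; apply: size_le_of_coef.
  rewrite /w; apply: (big_ind (fun p : {poly F} => (size p <= (m j).+1)%N)).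
  + by rewrite size_poly0.
  + by move=> p q sp sq; rewrite (leq_trans (size_add _ _)) // geq_max sp sq.
  move=> i _; case ci: (c i 0 == 0); first by rewrite (eqP ci) mul0r mulr0 size_poly0.
  have s1 : (size ((c i 0)%:P * 'X^(e i))%R <= (e i).+1)%N.
    by rewrite mul_polyC (leq_trans (size_scale_leq _ _)) // size_polyXn.
  have mij : (m i <= m j)%N by apply: Hj; rewrite ci.
  have hs : (size (S r i) + size ((c i 0)%:P * 'X^(e i))%R <= (m j).+2)%N.
    by rewrite -[(m j)](subnKC mij) -/(e i) -addnS -addSn leq_add // size_col.
  by rewrite (leq_trans (size_mul_leq _ _)) // -subn1 leq_subLR add1n.
rewrite /w coef_sum.
have := congr1 (fun A : 'cV[F]_n => A r 0) Hc; rewrite !mxE => E.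
apply: (etrans _ E); apply: eq_bigr => i _.
rewrite mxE; case ci: (c i 0 == 0); first by rewrite (eqP ci) mul0r mulr0 coef0 mulr0.
have mij : (m i <= m j)%N by apply: Hj; rewrite ci.
by rewrite mulrA coefMXn /e ltnNge leq_subr /= subKn // coefMC mulrC.
Qed.

End Minimal2.


Section Main.
Variable F : numClosedFieldType.

Lemma main_gen m0 n k (P : 'M[{poly F}]_(m0, n)) (S : 'M[{poly F}]_(n, k)) :
  right_minimal_basis P S ->
  exists W : 'M[F]_(k, n),
    has_exactly_simple_zeros (\det (map_mx polyC W *m S))
      (\sum_(j < k) vec_deg (col j S))%N.
Proof.
move=> HS.
have kn : (k <= n)%N by case: HS => [[_ rk _] _]; have := rank_leq_row (fracmx S); rewrite rk.
have [l En] : exists l, n = (k + l)%N by exists (n - k)%N; rewrite subnKC.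
subst n.
set m := fun i => vec_deg (col i S).
have Ts : forall i j, (size (S^T i j) <= (m i).+1)%N by move=> i j; rewrite mxE size_col.
have HT : forall z, row_free (mxpoly_eval S^T z).
  move=> z; rewrite /row_free /mxpoly_eval -map_trmx mxrank_tr.
  by have := eval_free HS z; rewrite /mxpoly_eval => ->.
have HH : row_free (\matrix_(i, j) (S^T i j)`_(m i)).
  have E : \matrix_(i, j) (S^T i j)`_(m i) =
      (\matrix_(r, i) (S r i)`_(vec_deg (col i S)) : 'M[F]_(k + l, k))^T.
    by apply/matrixP => i j; rewrite !mxE.
  by rewrite /row_free E mxrank_tr (hc_free HS).
have [V [uV HV]] := stepA Ts HT HH.
have [W [c [c0 EW]]] := convert S^T uV.
exists W^T.
have -> : \det (map_mx polyC W^T *m S) = \det (S^T *m map_mx polyC W).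
  by rewrite -det_tr trmx_mul map_trmx trmxK.
by rewrite EW; apply: exact_scale.
Qed.

End Main.

Unset Implicit Arguments.

Theorem theoremA3 (R : realType) (n k d : nat)
    (P : 'M[{poly R[i]}]_n) (S : 'M[{poly R[i]}]_(n, k)) :
  singular_mxpoly P ->
  mxpoly_deg P = d ->
  is_nrank P (n - k)%N ->
  right_minimal_basis P S ->
  let m := fun j : 'I_k => vec_deg (col j S) in
  let M := (\sum_(j < k) m j)%N in
  exists V : 'M[R[i]]_(n, k),
    has_exactly_simple_zeros (\det (map_mx polyC (conjT V) *m S)) M.
Proof.
move=> _ _ _ HS m M.
have [W HW] := @main_gen R[i] n n k P S HS.
exists (map_mx (fun z => z^*) W)^T.
have -> : conjT (map_mx (fun z => z^*) W)^T = W.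
  by apply/matrixP => i j; rewrite !mxE conjCK.
exact: HW.
Qed.
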